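(* Let $d=2$, write $z=(z_1,z_2)$, and for $r\ge2$ let $D_r=\{z\in\mathbb{R}^2:z_1\ge0,\ 2\le|z|\le r\}$. There exists a constant $c>0$ such that for all Borel $U:\mathbb{R}^2\to[0,\infty]$ and all $r\ge2$, $$\int_{D_r}K(1,z,(r,0))\,U(z)\,dz\le c\sup_{w\in\mathbb{R}^2}\int_{|z|\le2}U(z+w)\,dz,$$ where $K(1,z,(r,0))=e^{-\frac12 r(|z|-z_1)}\log\big(1+(r|z|)^{-1/2}\big)\mathbf 1_{|z|\le r}$. *)

(* Defs.v *)
From HB Require Import structures.
From mathcomp Require Import all_boot all_order all_algebra.
From mathcomp Require Import all_classical all_reals all_analysis.
From mathcomp Require Import measurable_realfun.
Set Implicit Arguments. Unset Strict Implicit. Unset Printing Implicit Defensive.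
Import Order.TTheory GRing.Theory Num.Theory.
Local Open Scope ring_scope.
Local Open Scope classical_set_scope.

Definition norm2 {R : realType} (z : R * R) : R := Num.sqrt (z.1 ^+ 2 + z.2 ^+ 2).

Definition leb2 (R : realType) := ((@lebesgue_measure R) \x (@lebesgue_measure R))%E.

Definition Dr {R : realType} (r : R) : set (R * R) :=
  [set z | 0 <= z.1 /\ 2 <= norm2 z <= r].

Definition K1 {R : realType} (r : R) (z : R * R) : R :=
  expR (- (2^-1 * r * (norm2 z - z.1))) * ln (1 + (r * norm2 z) `^ (- 2^-1))
  * (\1_[set y | norm2 y <= r] z).

Definition ball2 {R : realType} : set (R * R) := [set z | norm2 z <= 2].

(* Main.v *)
Require Import Defs.
From HB Require Import structures.
From mathcomp Require Import all_boot all_order all_algebra.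
From mathcomp Require Import all_classical all_reals all_analysis.
From mathcomp Require Import measurable_realfun ring lra.
Import Order.TTheory GRing.Theory Num.Theory.
Local Open Scope ring_scope.
Local Open Scope classical_set_scope.

Lemma leb_shift (R : realType) (c : R) (A : set R) : measurable A ->
  pushforward lebesgue_measure ((fun x : R => x + c) : R -> measurableTypeR R) A = lebesgue_measure A.
Proof.
move=> mA; apply/esym/lebesgue_measure_unique => //=.
  exact: measurable_funD.
move=> _ _ [[a b]] _ <-.
rewrite /pushforward /=.
rewrite [X in _ = lebesgue_measure X](_ : _ = `]a - c, b - c]%classic); last first.
  by apply/seteqP; split => x /=; rewrite !in_itv /= ltrBlDr lerBrDr.
rewrite !lebesgue_measure_itv /= !lte_fin ltrD2r.
by case: ifP => // _; rewrite -!EFinD; congr (_%:E); ring.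
Qed.

Definition sh {R : realType} (w : R * R) (z : R * R) : R * R := (z.1 + w.1, z.2 + w.2).

Lemma measurable_sh (R : realType) (w : R * R) : measurable_fun [set: R * R] (sh w).
Proof.
apply/measurable_fun_pairP; split.
  by apply: measurable_funD => //; exact: measurable_fst.
by apply: measurable_funD => //; exact: measurable_snd.
Qed.

Lemma leb2_shift (R : realType) (w : R * R) (X : set (R * R)) : measurable X ->
  pushforward (@leb2 R) (sh w) X = @leb2 R X.
Proof.
move=> mX; apply/esym.
pose m' := @measure_function_pushforward__canonical__measure_function_Measure _ _ (measurableTypeR R * measurableTypeR R)%type (measurableTypeR R * measurableTypeR R)%type R (@leb2 R) (sh w) (@measurable_sh R w).
rewrite /leb2; apply: (@product_measure_unique _ _ _ _ _ _ _ m') => // A B mA mB.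
rewrite /m' /= /pushforward.
have -> : sh w @^-1` (A `*` B) = ((fun x : R => x + w.1) @^-1` A) `*` ((fun x : R => x + w.2) @^-1` B).
  by apply/seteqP; split => -[x y].
rewrite product_measure1E.
- by rewrite -(@leb_shift R w.1 A mA) -(@leb_shift R w.2 B mB).
- by rewrite -[X in measurable X]setTI; apply: (measurable_funD _ _) => //.
- by rewrite -[X in measurable X]setTI; apply: (measurable_funD _ _) => //.
Qed.

Definition qd {R : realType} (w z : R * R) : R := (z.1 - w.1) ^+ 2 + (z.2 - w.2) ^+ 2.
Definition Bset {R : realType} (w : R * R) : set (R * R) := [set z | qd w z <= 4].

Lemma sqrt_le2 (R : realType) (s : R) : 0 <= s -> (Num.sqrt s <= 2) = (s <= 4).
Proof.
move=> s0; have -> : (2 : R) = Num.sqrt 4.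
  by rewrite (_ : (4:R) = 2 ^+ 2) ?sqrtr_sqr ?ger0_norm //; ring.
by rewrite ler_sqrt.
Qed.

Lemma ball2E (R : realType) : ball2 = Bset (0 : R * R).
Proof.
apply/seteqP; split => z; rewrite /ball2 /Bset /qd /norm2 /= !subr0 sqrt_le2 //;
  by rewrite addr_ge0 // sqr_ge0.
Qed.

Lemma measurable_Bset (R : realType) (w : R * R) : measurable (Bset w).
Proof.
have mq : measurable_fun [set: R * R] (qd w).
  rewrite /qd; apply: (@measurable_funD _ _ _ _ (fun z : R * R => (z.1 - w.1) ^+ 2) (fun z : R * R => (z.2 - w.2) ^+ 2)).
    apply: (measurable_funX (f := fun z : R*R => z.1 - w.1) 2).
    by apply: (@measurable_funB _ _ _ _ fst (fun=> w.1)) => //; exact: measurable_fst.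
  apply: (measurable_funX (f := fun z : R*R => z.2 - w.2) 2).
  by apply: (@measurable_funB _ _ _ _ snd (fun=> w.2)) => //; exact: measurable_snd.
rewrite [X in measurable X](_ : _ = setT `&` (qd w @^-1` `]-oo, 4]%classic)).
  exact: mq.
apply/seteqP; split => z /=; rewrite /Bset /= in_itv /= ?andbT; [by [] | by case].
Qed.

Lemma shift_integral (R : realType) (U : R * R -> \bar R) (w : R * R) :
  measurable_fun [set: R * R] U -> (forall z, (0 <= U z)%E) ->
  (\int[@leb2 R]_(y in Bset w) U y = \int[@leb2 R]_(z in ball2) U (sh w z))%E.
Proof.
move=> mU U0.
have mB := @measurable_Bset R w.
have -> : ball2 = sh w @^-1` Bset w.
  rewrite ball2E; apply/seteqP; split => z; rewrite /Bset /qd /sh /= !subr0 !addrK //.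
have H := @ge0_integral_pushforward _ _ (measurableTypeR R * measurableTypeR R)%type (measurableTypeR R * measurableTypeR R)%type R (sh w) (@measurable_sh R w) (@leb2 R) (Bset w) U mB (measurable_funS measurableT (@subsetT _ _) mU) (fun y _ => U0 y).
rewrite -[RHS]H.
apply: (@eq_measure_integral _ _ _ _ _ (@leb2 R)).
  exact: measurable_sh.
move=> mf A mA _.
exact: (esym (@leb2_shift R w A mA)).
Qed.
Lemma le_int_gen d (T : measurableType d) (R : realType)
  (mu : {measure set T -> \bar R}) (D : set T) (f g : T -> \bar R) :
  (forall x, D x -> (0 <= f x)%E) -> (forall x, D x -> (f x <= g x)%E) ->
  (\int[mu]_(x in D) f x <= \int[mu]_(x in D) g x)%E.
Proof.
move=> f0 fg.
have g0 x : D x -> (0 <= g x)%E by move=> Dx; apply: le_trans (f0 _ Dx) (fg _ Dx).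
rewrite !ge0_integralE //.
apply: le_ereal_sup => _ /= [h hf <-]; exists h => //= x.
apply: le_trans (hf x) _.
rewrite /patch; case: ifP => // /set_mem; exact: fg.
Qed.

Lemma sum_isqrt (R : realType) (n : nat) :
  \sum_(j < n) (Num.sqrt (j.+1)%:R)^-1 <= 2 * Num.sqrt (n%:R : R).
Proof.
elim: n => [|n IH]; first by rewrite big_ord0 sqrtr0 mulr0.
rewrite big_ord_recr /=.
apply: le_trans (lerD IH (lexx _)) _.
set a := Num.sqrt (n%:R : R); set b := Num.sqrt (n.+1%:R : R).
have a0 : 0 <= a by exact: sqrtr_ge0.
have b0 : 0 < b by rewrite sqrtr_gt0 ltr0n.
have ab : b ^+ 2 = a ^+ 2 + 1.
  by rewrite !sqr_sqrtr ?ler0n // -natr1.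
have : 1 <= 2 * (b - a) * b by nra.
move=> H.
rewrite -(ler_pM2r b0) mulrDl mulVf ?gt_eqF //.
nra.
Qed.

Lemma sum_geom (R : realType) (n : nat) :
  \sum_(t < n) (2^-1 : R) ^+ t <= 2 - 2 * (2^-1) ^+ n.
Proof.
elim: n => [|n IH]; first by rewrite big_ord0 expr0 mulr1 subrr.
rewrite big_ord_recr /=.
apply: le_trans (lerD IH (lexx _)) _.
rewrite exprS; lra.
Qed.
Lemma norm2_sqr {R : realType} (z : R * R) : norm2 z ^+ 2 = z.1 ^+ 2 + z.2 ^+ 2.
Proof. by rewrite /norm2 sqr_sqrtr // addr_ge0 // sqr_ge0. Qed.

Lemma norm2_ge0 {R : realType} (z : R * R) : 0 <= norm2 z.
Proof. exact: sqrtr_ge0. Qed.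

Lemma K1_ge0 {R : realType} (r : R) (z : R * R) : 0 <= K1 r z.
Proof.
rewrite /K1; apply: mulr_ge0; last by rewrite indicE ler0n.
apply: mulr_ge0; first exact: expR_ge0.
apply: ln_ge0; rewrite lerDl; exact: powR_ge0.
Qed.

Lemma expRm1_le {R : realType} (t : nat) : expR (- (t%:R : R)) <= (2^-1) ^+ t.
Proof.
rewrite -mulN1r expRM_natr.
have e1 : expR (-1 : R) <= 2^-1.
  rewrite expRN lef_pV2 ?posrE ?expR_gt0 //.
  by have := expR_ge1Dx (1 : R); rewrite (_ : 1 + 1 = 2 :> R) //.
elim: t => [|t IH]; first by rewrite !expr0.
by rewrite !exprS; apply: ler_pM.
Qed.

Lemma K_bound {R : realType} (r : R) (z : R * R) (j t : nat) :
  2 <= r -> Dr r z -> (j%:R : R) * 2 <= z.1 -> (t%:R : R) * 2 <= `|z.2| ->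
  K1 r z <= (Num.sqrt (r * (j.+1)%:R))^-1 * (2^-1) ^+ t.
Proof.
move=> r2 [z10 /andP[rho2 rhor]] jz tz.
set rho := norm2 z in rho2 rhor.
have rho0 : 0 <= rho := norm2_ge0 z.
have rsq : rho ^+ 2 = z.1 ^+ 2 + z.2 ^+ 2 := norm2_sqr z.
have z1rho : z.1 <= rho by nra.
rewrite /K1 indicE mem_set // mulr1 mulrC.
apply: ler_pM.
- apply: ln_ge0; rewrite lerDl; exact: powR_ge0.
- exact: expR_ge0.
- have rr0 : 0 < r * rho by apply: mulr_gt0; lra.
  rewrite powRN powR12_sqrt; last exact: ltW.
  set x := (Num.sqrt (r * rho))^-1.
  have x0 : 0 <= x by rewrite invr_ge0 sqrtr_ge0.
  apply: (@le_trans _ _ x).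
    rewrite -[X in _ <= X]expRK ler_ln ?posrE ?expR_gt0 //; last lra.
    exact: expR_ge1Dx.
  rewrite /x lef_pV2 ?posrE ?sqrtr_gt0 //; last first.
    by apply: mulr_gt0; [lra | rewrite ltr0n].
  rewrite ler_sqrt; last lra.
  apply: ler_wpM2l; first lra.
  rewrite -natr1; lra.
- apply: le_trans (expRm1_le t).
  rewrite ler_expR lerN2.
  set T := (t%:R : R).
  have T0 : 0 <= T by rewrite ler0n.
  have TT : T <= T ^+ 2.
    rewrite /T -natrX ler_nat; case: t {tz T T0} => // t.
    by rewrite expnS leq_pmulr.
  have z2sq : 4 * T ^+ 2 <= z.2 ^+ 2.
    have -> : z.2 ^+ 2 = `|z.2| ^+ 2 by rewrite real_normK // num_real.
    have := normr_ge0 z.2; nra.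
  have h1 : (rho + z.1) * (rho - z.1) <= 2 * r * (rho - z.1).
    apply: ler_wpM2r; lra.
  rewrite -/rho.
  have h2 : 4 * T <= 2 * r * (rho - z.1) by nra.
  lra.
Qed.

Lemma patch_ge0 {R : realType} (U : R * R -> \bar R) (B : set (R * R)) z :
  (forall z, (0 <= U z)%E) -> (0 <= (U \_ B) z)%E.
Proof. by move=> U0; rewrite /patch; case: ifP. Qed.

Lemma sq_le1 {R : realType} (a : R) : -1 <= a <= 1 -> a ^+ 2 <= 1.
Proof. move=> /andP[h1 h2]; nra. Qed.

Theorem lemma4p4 (R : realType) :
  exists c : R, 0 < c /\
    forall (U : R * R -> \bar R), measurable_fun [set: R * R] U -> (forall z, (0 <= U z)%E) ->
    forall r : R, 2 <= r ->
      (\int[@leb2 R]_(z in Dr r) ((K1 r z)%:E * U z)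
        <= c%:E * ereal_sup [set \int[@leb2 R]_(z in ball2) U ((z.1 + w.1)%R, (z.2 + w.2)%R)
                             | w in [set: R * R]])%E.
Proof.
exists 8; split; first lra.
move=> U mU U0 r r2.
set S := ereal_sup _.
have SB w : (\int[@leb2 R]_(y in Bset w) U y <= S)%E.
  rewrite shift_integral //; apply: ereal_sup_ubound; exists w => //.
have S0 : (0 <= S)%E.
  apply: le_trans (SB 0); apply: integral_ge0 => y _; exact: U0.
pose N := Num.trunc (r / 2).
have hN : (N.+1%:R : R) <= r.
  have := Num.Theory.trunc_itv (_ : 0 <= r / 2).
  rewrite -/N => /(_ ltac:(lra)) /andP[h _]; rewrite -natr1; lra.
have hN2 : r / 2 < (N.+1%:R : R).
  have := Num.Theory.trunc_itv (_ : 0 <= r / 2).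
  by rewrite -/N => /(_ ltac:(lra)) /andP[_ h].
pose al (j : nat) : R := (Num.sqrt (r * (j.+1)%:R))^-1.
pose ga (t : nat) : R := (2^-1) ^+ t.
pose c1 (j t : nat) : R * R := ((j%:R * 2 + 1), (t%:R * 2 + 1)).
pose c2 (j t : nat) : R * R := ((j%:R * 2 + 1), - (t%:R * 2 + 1)).
pose F (j t : nat) (z : R * R) :=
  ((al j * ga t)%:E * ((U \_ (Bset (c1 j t))) z + (U \_ (Bset (c2 j t))) z))%E.
have al0 j : 0 <= al j by rewrite invr_ge0 sqrtr_ge0.
have ga0 t : 0 <= ga t by rewrite exprn_ge0.
have F0 j t z : (0 <= F j t z)%E.
  by apply: mule_ge0; [rewrite lee_fin mulr_ge0 | apply: adde_ge0; apply: patch_ge0].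
have mR w : measurable_fun [set: R * R] (U \_ (Bset w)).
  apply/(measurable_restrictT U (@measurable_Bset R w)); exact: measurable_funS mU.
have mF j t : measurable_fun [set: R * R] (F j t).
  by apply: measurable_funeM; apply: emeasurable_funD.
have Hpt z : Dr r z -> ((K1 r z)%:E * U z <= \sum_(j < N.+1) \sum_(t < N.+1) F j t z)%E.
  move=> Dz; have := Dz => -[z10 /andP[rho2 rhor]].
  have rsq := norm2_sqr z; have rho0 := norm2_ge0 z.
  have z1r : z.1 <= r by nra.
  have n2 : `|z.2| ^+ 2 = z.2 ^+ 2 by rewrite real_normK // num_real.
  have z2r : `|z.2| <= r.
    have h : `|z.2| ^+ 2 <= norm2 z ^+ 2 by rewrite n2 rsq; have := sqr_ge0 z.1; lra.
    rewrite -ler_sqrt ?sqr_ge0 // !sqrtr_sqr normr_id (ger0_norm rho0) in h.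
    lra.
  pose j := Num.trunc (z.1 / 2); pose t := Num.trunc (`|z.2| / 2).
  have /andP[hj1 hj2] := Num.Theory.trunc_itv (ltac:(lra) : 0 <= z.1 / 2).
  have /andP[ht1 ht2] := Num.Theory.trunc_itv (ltac:(have := normr_ge0 z.2; lra) : 0 <= `|z.2| / 2).
  rewrite -/j in hj1 hj2; rewrite -/t in ht1 ht2.
  have jN : (j < N.+1)%N.
    by rewrite -(ltr_nat R); apply: le_lt_trans hN2; lra.
  have tN : (t < N.+1)%N.
    by rewrite -(ltr_nat R); apply: le_lt_trans hN2; lra.
  apply: (@le_trans _ _ (\sum_(t' < N.+1) F j t' z)); last first.
    rewrite [X in (_ <= X)%E](bigD1 (Ordinal jN)) //=; apply: leeDl.
    by apply: sume_ge0 => i _; apply: sume_ge0 => k _; exact: F0.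
  apply: (@le_trans _ _ (F j t z)); last first.
    rewrite [X in (_ <= X)%E](bigD1 (Ordinal tN)) //=; apply: leeDl.
    by apply: sume_ge0 => i _; exact: F0.
  have KB : K1 r z <= al j * ga t.
    apply: K_bound => //; lra.
  have hj2' : z.1 < j%:R * 2 + 2.
    have e : (j.+1%:R : R) = j%:R + 1 by rewrite -addn1 natrD.
    by rewrite e in hj2; lra.
  have ht2' : `|z.2| < t%:R * 2 + 2.
    have e : (t.+1%:R : R) = t%:R + 1 by rewrite -addn1 natrD.
    by rewrite e in ht2; lra.
  rewrite /F.
  apply: (@le_trans _ _ ((al j * ga t)%:E * U z)%E).
    by apply: lee_wpmul2r => //; rewrite lee_fin.
  apply: lee_wpmul2l; first by rewrite lee_fin mulr_ge0.
  have a1 : (z.1 - (j%:R * 2 + 1)) ^+ 2 <= 1.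
    by apply: sq_le1; apply/andP; split; lra.
  have [z2p|z2n] := lerP 0 z.2.
    have B1 : Bset (c1 j t) z.
      rewrite ger0_norm // in ht1 ht2'.
      have a2 : (z.2 - (t%:R * 2 + 1)) ^+ 2 <= 1.
        by apply: sq_le1; apply/andP; split; lra.
      rewrite /Bset /qd /=; lra.
    by rewrite {1}/patch mem_set //; apply: leeDl; exact: patch_ge0.
  have B2 : Bset (c2 j t) z.
    rewrite ltr0_norm // in ht1 ht2'.
    have a2 : (z.2 - - (t%:R * 2 + 1)) ^+ 2 <= 1.
      by apply: sq_le1; apply/andP; split; lra.
    rewrite /Bset /qd /=; lra.
  rewrite [X in (_ <= _ + X)%E]/patch mem_set //; rewrite addeC; apply: leeDl; exact: patch_ge0.
apply: (@le_trans _ _ (\int[@leb2 R]_z (\sum_(j < N.+1) \sum_(t < N.+1) F j t z))%E).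
  rewrite integral_mkcond; apply: le_int_gen => z _.
    rewrite /patch; case: ifP => // _; apply: mule_ge0 => //; rewrite lee_fin; exact: K1_ge0.
  rewrite /patch; case: ifP => [/set_mem|_]; first exact: Hpt.
  by apply: sume_ge0 => i _; apply: sume_ge0 => k _; exact: F0.
rewrite ge0_integral_sum //; last first.
- by move=> j z _; apply: sume_ge0 => k _; exact: F0.
- by move=> j; apply: emeasurable_sum => k; exact: mF.
apply: (@le_trans _ _ (\sum_(j < N.+1) \sum_(t < N.+1) ((al j * ga t)%:E * (S + S)))%E).
  apply: lee_sum => j _.
  rewrite ge0_integral_sum //; try (by move=> k; exact: mF); try (by move=> k z _; exact: F0).
  apply: lee_sum => t _.
  rewrite /F ge0_integralZl //; try (by apply: emeasurable_funD; apply: mR); try (by move=> z _; apply: adde_ge0; exact: patch_ge0); try (by rewrite lee_fin mulr_ge0).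
  apply: lee_wpmul2l; first by rewrite lee_fin mulr_ge0.
  rewrite ge0_integralD //; try (by move=> z _; exact: patch_ge0); try (by apply: mR).
  apply: leeD.
    by have := SB (c1 j t); rewrite [in X in X -> _]integral_mkcond.
  by have := SB (c2 j t); rewrite [in X in X -> _]integral_mkcond.
have Hal : \sum_(j < N.+1) al j <= 2.
  have r0 : 0 < r by lra.
  have e j : al j = (Num.sqrt r)^-1 * (Num.sqrt (j.+1%:R))^-1.
    by rewrite /al sqrtrM ?invfM //; exact: ltW.
  under eq_bigr do rewrite e.
  rewrite -mulr_sumr.
  apply: le_trans (ler_wpM2l _ (sum_isqrt R N.+1)) _.
    by rewrite invr_ge0 sqrtr_ge0.
  have sr : 0 < Num.sqrt r by rewrite sqrtr_gt0.
  have sN : Num.sqrt (N.+1%:R : R) <= Num.sqrt r by rewrite ler_sqrt //; lra.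
  rewrite mulrCA -[X in _ <= X]mulr1 ler_wpM2l // ler_pdivrMl // mulr1 //.
have Hga : \sum_(t < N.+1) ga t <= 2.
  apply: le_trans (sum_geom R N.+1) _.
  have := exprn_ge0 N.+1 (_ : 0 <= 2^-1 :> R); rewrite invr_ge0 ler0n => /(_ isT); lra.
have Hsum : \sum_(j < N.+1) \sum_(t < N.+1) al j * ga t <= 4.
  under eq_bigr do rewrite -mulr_sumr.
  rewrite -mulr_suml.
  rewrite (_ : (4 : R) = 2 * 2); last lra.
  apply: ler_pM => //.
  - by apply: sumr_ge0 => j _.
  - by apply: sumr_ge0 => t _.
have Hsum0 : 0 <= \sum_(j < N.+1) \sum_(t < N.+1) al j * ga t.
  by apply: sumr_ge0 => j _; apply: sumr_ge0 => t _; rewrite mulr_ge0.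
clear SB; move: S0; case: S => [s| |] S0.
- rewrite -EFinD.
  under eq_bigr do under eq_bigr do rewrite -EFinM.
  under eq_bigr do rewrite sumEFin.
  rewrite sumEFin -EFinM lee_fin.
  under eq_bigr do rewrite -mulr_suml.
  rewrite -mulr_suml.
  rewrite lee_fin in S0.
  apply: le_trans (ler_wpM2r _ Hsum) _; first by rewrite addr_ge0.
  by have -> : 4 * (s + s) = 8 * s by ring.
- by rewrite mulry gtr0_sg // mul1e; exact: leey.
- by [].
Qed.
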